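(* Let $S$ be a numerical semigroup with $\mathrm{msg}(S)=\{n_1<n_2<\cdots<n_e<n_{e+1}\}$, where $e\geq 2$, and let $S'=\langle n_1,n_2,\ldots,n_e\rangle$ with $\mathrm{Ap}(S',n_1)=\{w'(0),w'(1),\ldots,w'(n_1-1)\}$, where $w'(i)$ is the least element of $S'$ congruent to $i$ modulo $n_1$. Then $S$ is a MANS-semigroup if and only if all of the following hold: (1) $S'$ is a MANS-semigroup; (2) $n_e \bmod n_1 < n_{e+1}\bmod n_1$; (3) $w'(n_{e+1}\bmod n_1-1)<n_{e+1}<w'(n_{e+1}\bmod n_1)$.
   Context: $\mathbb{N}=\{0,1,2,\ldots\}$. A numerical semigroup is a subset $S\subseteq\mathbb{N}$ closed under addition, containing $0$, with $\mathbb{N}\setminus S$ finite. $\langle A\rangle$ denotes the submonoid of $(\mathbb{N},+)$ generated by $A$. $\mathrm{msg}(S)$ is the (unique, finite) minimal system of generators of $S$. The multiplicity $\mathrm{m}(S)$ is the least element of $S\setminus\{0\}$. For $n\in S\setminus\{0\}$, $\mathrm{Ap}(S,n)=\{s\in S: s-n\notin S\}=\{w(0),\ldots,w(n-1)\}$ with $w(i)$ the least element of $S$ congruent to $i$ modulo $n$. $S$ is a MANS-semigroup if $w(1)<w(2)<\cdots<w(\mathrm{m}(S)-1)$ for the elements $w(i)$ of $\mathrm{Ap}(S,\mathrm{m}(S))$. $a\bmod b$ is the remainder of the division of $a$ by $b$. *)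

(* Defs.v *)
From mathcomp Require Import all_boot.
Set Implicit Arguments. Unset Strict Implicit. Unset Printing Implicit Defensive.

Definition numerical_semigroup (S : nat -> Prop) : Prop :=
  [/\ S 0, (forall x y, S x -> S y -> S (x + y))
    & exists N, forall x, N <= x -> S x].

Inductive gen (A : seq nat) : nat -> Prop :=
| gen0 : gen A 0
| genS : forall a x, a \in A -> gen A x -> gen A (a + x).

Definition in_msg (S : nat -> Prop) (x : nat) : Prop :=
  [/\ S x, 0 < x &
      ~ (exists a b, [/\ S a, S b, 0 < a, 0 < b & x = a + b])].

Definition is_mult (S : nat -> Prop) (m : nat) : Prop :=
  [/\ S m, 0 < m & forall s, S s -> 0 < s -> m <= s].

Definition is_apery (S : nat -> Prop) (n i w : nat) : Prop :=
  [/\ S w, w %% n = i %% n &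
      forall s, S s -> s %% n = i %% n -> w <= s].

Definition MANS (S : nat -> Prop) : Prop :=
  numerical_semigroup S /\
  forall m, is_mult S m ->
    forall i wi wj, 1 <= i -> i.+1 <= m - 1 ->
      is_apery S m i wi -> is_apery S m i.+1 wj -> wi < wj.

(* Main.v *)
Require Import Defs.
From mathcomp Require Import all_boot zify.
From Stdlib Require Import Classical.
Set Implicit Arguments. Unset Strict Implicit. Unset Printing Implicit Defensive.

Lemma ex_min_P (P : nat -> Prop) : (exists n, P n) -> exists n, P n /\ forall k, P k -> n <= k.
Proof.
move=> [n Pn].
elim/ltn_ind: n Pn => n IH Pn.
case: (classic (exists k, k < n /\ P k)) => [[k [kn Pk]]|H].
  exact: (IH k kn Pk).
exists n; split=> // k Pk; rewrite leqNgt; apply/negP=> kn; apply: H; by exists k.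
Qed.

Lemma ns_mulm (T : nat -> Prop) m k : T 0 -> (forall x y, T x -> T y -> T (x + y)) -> T m -> T (k * m).
Proof. move=> T0 Tadd Tm; elim: k => [|k IH] //; rewrite mulSn; exact: Tadd. Qed.

Lemma apery_ex T m i : numerical_semigroup T -> 0 < m -> exists w, is_apery T m i w.
Proof.
case=> T0 Tadd [N HN] m0.
have Hex : exists s, T s /\ s %% m = i %% m.
  exists (i %% m + N * m); split; last by rewrite addnC modnMDl modn_mod.
  apply: HN; apply: (leq_trans (leq_pmull N m0)); rewrite mulnC; exact: leq_addl.
have [w [[Tw Hw] Hmin]] := ex_min_P Hex.
by exists w; split=> // s Ts Hs; apply: Hmin.
Qed.
Lemma apery0 T m w : T 0 -> is_apery T m 0 w -> w = 0.
Proof. by move=> T0 [_ _ H]; apply/eqP; rewrite -leqn0; apply: H. Qed.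

Lemma apery_le T m i w s : is_apery T m i w -> T s -> s %% m = i %% m -> w <= s.
Proof. by case=> _ _ H; apply: H. Qed.

Lemma chain T m : numerical_semigroup T -> 0 < m ->
  (forall i wi wj, 1 <= i -> i.+1 <= m - 1 -> is_apery T m i wi -> is_apery T m i.+1 wj -> wi < wj) ->
  forall d j wj wk, 1 <= j -> j + d <= m - 1 -> is_apery T m j wj -> is_apery T m (j + d) wk -> wj <= wk.
Proof.
move=> NT m0 HM; elim=> [|d IH] j wj wk j1 jd Hj Hk.
  rewrite addn0 in Hk; case: Hk => Tk Rk _; exact: (apery_le Hj Tk Rk).
have [w Hw] := apery_ex (j + d) NT m0.
have h : wj <= w by apply: (IH j wj w) => //; lia.
apply: (leq_trans h); apply: ltnW; apply: (HM (j + d) w wk) => //; try lia.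
by rewrite -addnS.
Qed.

Lemma gen_add A x y : gen A x -> gen A y -> gen A (x + y).
Proof. elim=> [|a x0 Ha _ IH] Hy; first by rewrite add0n. rewrite -addnA; exact: genS (IH Hy). Qed.

Lemma gen_mul A x k : gen A x -> gen A (k * x).
Proof. move=> Hx; elim: k => [|k IH]; first exact: gen0. rewrite mulSn; exact: gen_add. Qed.

Lemma gen_dec A x : gen A x -> 0 < x -> exists a y, [/\ a \in A, gen A y & x = a + y].
Proof. case=> [//|a y Ha Hy] _; by exists a, y. Qed.

Lemma gen_sub A B x : {subset A <= B} -> gen A x -> gen B x.
Proof. move=> sAB; elim=> [|a y Ha _ IH]; [exact: gen0| exact: genS (sAB _ Ha) IH]. Qed.

Lemma S_gen S ns : numerical_semigroup S -> (forall x, x \in ns <-> in_msg S x) ->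
  forall x, S x <-> gen ns x.
Proof.
case=> S0 Sadd _ Hms x; split.
  elim/ltn_ind: x => x IH Sx.
  case: (posnP x) => [->|x0]; first exact: gen0.
  case: (classic (in_msg S x)) => [/Hms Hx|Hn].
    by rewrite -[x]addn0; apply: genS Hx (gen0 _).
  have [[a [b [Sa Sb a0 b0 xab]]]|Hne] := classic (exists a b, [/\ S a, S b, 0 < a, 0 < b & x = a + b]).
    rewrite xab; apply: gen_add; apply: IH => //; lia.
  by case: Hn; split.
elim=> [|a y /Hms [Sa _ _] _ IH] //; exact: Sadd.
Qed.

Unset Implicit Arguments.

(* ns = [:: n_1; ...; n_{e+1}] (0-indexed: n_k = nth 0 ns (k-1)). *)
Theorem theorem4p4 (S : nat -> Prop) (e : nat) (ns : seq nat) :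
  numerical_semigroup S ->
  2 <= e ->
  size ns = e.+1 ->
  sorted ltn ns ->
  (forall x, x \in ns <-> in_msg S x) ->
  let n1 := nth 0 ns 0 in
  let ne := nth 0 ns e.-1 in
  let ne1 := nth 0 ns e in
  let S' := gen (take e ns) in
  MANS S <->
  [/\ MANS S',
      ne %% n1 < ne1 %% n1 &
      forall a b, is_apery S' n1 ((ne1 %% n1) - 1) a ->
                  is_apery S' n1 (ne1 %% n1) b ->
                  a < ne1 < b].
Proof.
move=> NS e2 Hsz Hsort Hms; cbv zeta.
set m := nth 0 ns 0. set n := nth 0 ns e. set ne := nth 0 ns e.-1.
have Hlt : forall i j, i < j -> j <= e -> nth 0 ns i < nth 0 ns j.
  move=> i j ij je; apply: (sorted_ltn_nth ltn_trans 0 Hsort) => //; rewrite inE Hsz; lia.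
have Htake : forall x, x \in take e ns -> x < n.
  move=> x /(nthP 0) [k]; rewrite size_take Hsz ltnSn => ke <-.
  by rewrite nth_take //; apply: Hlt.
have Hge : forall x, x \in ns -> m <= x.
  move=> x /(nthP 0) [k]; rewrite Hsz => ke <-.
  case: (posnP k) => [->//|k0]; apply: ltnW; apply: Hlt => //.
have Edec : ns = take e ns ++ [:: n].
  by rewrite -{1}(cat_take_drop e ns) (drop_nth 0) ?Hsz // drop_oversize ?Hsz.
have Hns : forall x, x \in ns -> x \in take e ns \/ x = n.
  move=> x; rewrite {1}Edec mem_cat mem_seq1 => /orP[->|/eqP->]; by [left|right].
have mns : m \in ns by apply/(nthP 0); exists 0; rewrite ?Hsz.
have mtake : m \in take e ns.
  by apply/(nthP 0); exists 0; rewrite ?size_take ?Hsz ?ltnSn ?nth_take //; lia.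
have nns : n \in ns by apply/(nthP 0); exists e; rewrite ?Hsz.
have nens : ne \in ns by apply/(nthP 0); exists e.-1; rewrite ?Hsz //; lia.
have mne : m < ne by apply: Hlt; lia.
have nen : ne < n by apply: Hlt; lia.
have HSg := S_gen NS Hms.
have [S0 Sadd _] := NS.
have m0 : 0 < m by have [_ ? _] := (Hms m).1 mns.
have Sm : S m by have [? _ _] := (Hms m).1 mns.
have Sn : S n by have [? _ _] := (Hms n).1 nns.
have Sne : S ne by have [? _ _] := (Hms ne).1 nens.
have Smul : forall k, S (k * m) by move=> k; apply: ns_mulm.
have Hmult : forall s, S s -> 0 < s -> m <= s.
  move=> s /HSg Hs s0; have [a [y [Ha _ ->]]] := gen_dec Hs s0.
  exact: leq_trans (Hge a Ha) (leq_addr _ _).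
have HisM : is_mult S m by split.
have Hsub : forall s, gen (take e ns) s -> S s.
  by move=> s Hs; apply/HSg; apply: gen_sub Hs => x; apply: mem_take.
have Hdec : forall x, S x -> gen (take e ns) x \/ exists y, S y /\ x = n + y.
  move=> x /HSg; elim=> [|a y Ha Hy IH]; first by left; exact: gen0.
  have Sa : S a by have [? _ _] := (Hms a).1 Ha.
  case: (Hns a Ha) => [Ha'|->]; last by right; exists y; split => //; apply/HSg.
  case: IH => [Hy'|[z [Sz ->]]]; first by left; exact: genS.
  by right; exists (a + z); split; [exact: Sadd | rewrite addnCA].
have HP : forall s, S s -> s < n -> gen (take e ns) s.
  move=> s Ss sn; case: (Hdec s Ss) => [//|[y [_ E]]]; lia.
have Hmsg : forall x, x \in ns -> ~ exists a b, [/\ S a, S b, 0 < a, 0 < b & x = a + b].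
  by move=> x /Hms [].
have Hnm0 : forall x, x \in ns -> m < x -> x %% m != 0.
  move=> x Hx mx; apply/negP => /eqP H0; apply: (Hmsg x Hx).
  have Hd : m %| x - m by rewrite dvdn_sub // /dvdn H0.
  exists m, (x - m); split => //; [by rewrite -(divnK Hd); apply: Smul | lia | lia].
have HnS' : ~ gen (take e ns) n.
  move=> Hn; have [a [y [Ha Hy E]]] := gen_dec Hn (leq_ltn_trans (leq0n _) (Htake m mtake)).
  have an := Htake a Ha.
  have a0 : 0 < a := leq_trans m0 (Hge a (mem_take Ha)).
  apply: (Hmsg n nns); exists a, y; split => //; try lia.
  - by have [? _ _] := (Hms a).1 (mem_take Ha).
  - exact: Hsub.
have r1 : 0 < n %% m by rewrite lt0n; apply: Hnm0 => //; lia.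
have rm : n %% m < m by apply: ltn_pmod.
have HnAp : is_apery S m (n %% m) n.
  split => //; first by rewrite modn_mod.
  move=> s Ss Hs; rewrite leqNgt; apply/negP => sn.
  have Hd : m %| n - s by rewrite -eqn_mod_dvd ?(ltnW sn) // Hs modn_mod.
  case: (posnP s) => [s0|s0].
    by move: Hs; rewrite s0 mod0n modn_mod => H; move: r1; rewrite -H.
  apply: (Hmsg n nns); exists s, (n - s); split => //; try lia.
  by rewrite -(divnK Hd); apply: Smul.
have Smt : gen (take e ns) m by rewrite -[m]addn0; apply: genS mtake (gen0 _).
split.
  case=> _ HM; have HwS := HM m HisM; have chS := chain NS m0 HwS.
  have H2 : ne %% m < n %% m.
    rewrite ltnNge; apply/negP => rho.
    have [w Hw] := apery_ex (ne %% m) NS m0.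
    have Hw' : is_apery S m (n %% m + (ne %% m - n %% m)) w by rewrite subnKC.
    have nem : ne %% m < m by apply: ltn_pmod.
    have nw := chS (ne %% m - n %% m) (n %% m) n w r1 ltac:(lia) HnAp Hw'.
    have wne : w <= ne by apply: (apery_le Hw Sne); rewrite modn_mod.
    lia.
  have rho0 : 0 < ne %% m by rewrite lt0n; apply: Hnm0.
  have r2 : 1 < n %% m by lia.
  split => //.
  - have [g Hg] := apery_ex 1 NS m0.
    have [Sg Rg _] := Hg.
    have Rg' : g %% m = 1 by rewrite Rg modn_small //; lia.
    have gn : g < n.
      have Hg' : is_apery S m (1 + (n %% m - 1)) n by rewrite subnKC.
      have := chS (n %% m - 1) 1 g n (isT : 0 < 1) ltac:(lia) Hg Hg'.
      rewrite leq_eqVlt => /orP[/eqP E|//]; move: Rg'; rewrite E; lia.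
    have S'g : gen (take e ns) g by apply: HP.
    have NS' : numerical_semigroup (gen (take e ns)).
      split; [exact: gen0 | exact: gen_add |].
      exists ((m - 1) * g) => x Hx.
      have jm : x %% m <= m - 1 by have := ltn_pmod x m0; lia.
      have jg : x %% m * g <= x := leq_trans (leq_mul jm (leqnn g)) Hx.
      rewrite -(subnKC jg); apply: gen_add; first exact: gen_mul.
      have Hd : m %| x - x %% m * g.
        by rewrite -eqn_mod_dvd // -modnMmr Rg' muln1 modn_mod.
      by rewrite -(divnK Hd); apply: gen_mul.
    split => // m' Hm' i wi wj i1 im Hi Hj.
    have em' : m' = m.
      case: Hm' => Sm'1 m'0 Hm'min; apply/eqP; rewrite eqn_leq (Hm'min m Smt m0).
      by rewrite Hmult //; apply: Hsub.
    subst m'.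
    case: Hj => Sj Rj Mj.
    have j0 : 0 < wj.
      rewrite lt0n; apply/eqP=> E; move: Rj; rewrite E mod0n modn_small //; lia.
    have [a [y [Ha Hy E]]] := gen_dec Sj j0.
    have Sa : S a by have [? _ _] := (Hms a).1 (mem_take Ha).
    have an := Htake a Ha.
    have a0 : 0 < a := leq_trans m0 (Hge a (mem_take Ha)).
    have rho0' : 0 < a %% m.
      rewrite lt0n; apply/negP => /eqP H0.
      have : wj <= y by apply: Mj => //; rewrite -Rj E -modnDml H0 add0n.
      lia.
    have rhom : a %% m < m by apply: ltn_pmod.
    have [c Hc] := apery_ex (a %% m - 1) NS m0.
    have [Sc Rc _] := Hc.
    have ca : c < a.
      case: (ltnP 1 (a %% m)) => [r1'|r1'].
        have e1 : (a %% m - 1).+1 = a %% m by move: r1'; clear; lia.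
        have [wa Hwa] := apery_ex (a %% m) NS m0.
        have cwa : c < wa.
          apply: (HwS (a %% m - 1) c wa) => //.
          + by move: r1'; clear; lia.
          + by rewrite e1; move: rhom; clear; lia.
          + by rewrite e1.
        have : wa <= a by apply: (apery_le Hwa Sa); rewrite modn_mod.
        by move: cwa; clear; lia.
      have e0 : a %% m - 1 = 0 by move: r1'; clear; lia.
      have c0 : c = 0 by move: (Hc); rewrite e0; apply: apery0.
      by rewrite c0.
    have S'c : gen (take e ns) c by apply: HP => //; exact: ltn_trans ca an.
    have : wi <= c + y.
      apply: (apery_le Hi (gen_add S'c Hy)).
      apply/eqP; rewrite -(eqn_modDr 1) [i + 1]addn1 -Rj E.
      rewrite (_ : c + y + 1 = c + (1 + y)); last by clear; lia.
      have e1 : a %% m - 1 + 1 = a %% m by move: rho0'; clear; lia.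
      rewrite -modnDml Rc modnDml addnA e1.
      by rewrite -[in X in _ == X]modnDml.
    by move=> h; rewrite E; move: h ca; clear; lia.
  - move=> a b Ha Hb; apply/andP; split.
      have [w Hw] := apery_ex (n %% m - 1) NS m0.
      have e1 : (n %% m - 1).+1 = n %% m by move: r2; clear; lia.
      have Hn' : is_apery S m (n %% m - 1).+1 n by rewrite e1.
      have wn : w < n.
        apply: (HwS (n %% m - 1) w n) => //.
        + by move: r2; clear; lia.
        + by rewrite e1; move: rm; clear; lia.
      have [Sw Rw _] := Hw.
      have := apery_le Ha (HP w Sw wn) Rw; move=> h; exact: leq_ltn_trans h wn.
    case: Hb => Sb Rb _.
    have := apery_le HnAp (Hsub _ Sb) Rb.
    rewrite leq_eqVlt => /orP[/eqP E|//]; by rewrite E in HnS'.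
case=> HM' H2 H3; split => // m' Hm'.
have em' : m' = m.
  case: Hm' => Sm'1 m'0 Hm'min; apply/eqP; rewrite eqn_leq (Hm'min m Sm m0).
  by rewrite Hmult.
subst m'.
have HisM' : is_mult (gen (take e ns)) m.
  by split => // s Hs s0; apply: Hmult => //; apply: Hsub.
have [NS' HM'2] := HM'.
have HwS' := HM'2 m HisM'.
have chS' := chain NS' m0 HwS'.
have m1 : 1 < m by move: r1 rm; clear; lia.
have [a Ha] := apery_ex (n %% m - 1) NS' m0.
have [b Hb] := apery_ex (n %% m) NS' m0.
have /andP[an nb] := H3 a b Ha Hb.
have Hbelow : forall j u, 1 <= j -> j <= n %% m - 1 -> is_apery (gen (take e ns)) m j u -> u < n.
  move=> j u j1 jr Hu.
  have Ha' : is_apery (gen (take e ns)) m (j + (n %% m - 1 - j)) a by rewrite subnKC.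
  have := chS' (n %% m - 1 - j) j u a j1 _ Hu Ha'.
  move=> h; apply: leq_ltn_trans (h _) an.
  by rewrite subnKC //; move: rm; clear; lia.
move=> i; elim/ltn_ind: i => i IH wi wj i1 im Hi Hj.
have [Sj Rj _] := Hj.
case: (ltnP i.+1 (n %% m)) => [ir|ri].
  have [u Hu] := apery_ex i NS' m0.
  have [v Hv] := apery_ex i.+1 NS' m0.
  have uv := HwS' i u v i1 im Hu Hv.
  have vn : v < n by apply: (Hbelow i.+1 v isT) => //; move: ir; clear; lia.
  have [Su Ru _] := Hu. have [Sv Rv _] := Hv.
  have wiu := apery_le Hi (Hsub _ Su) Ru.
  have wjv := apery_le Hj (Hsub _ Sv) Rv.
  have S'j := HP wj Sj (leq_ltn_trans wjv vn).
  have vwj := apery_le Hv S'j Rj.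
  by move: wiu uv vwj; clear; lia.
case: (eqVneq i.+1 (n %% m)) => [ir|ir].
  have [Sa Ra _] := Ha.
  have Ra' : a %% m = i %% m by rewrite Ra -ir subSS subn0.
  have wia := apery_le Hi (Hsub _ Sa) Ra'.
  have nwj : n <= wj.
    rewrite leqNgt; apply/negP => wjn.
    have h : b <= wj by apply: (apery_le Hb (HP wj Sj wjn)); rewrite Rj ir.
    by move: h nb wjn; clear; lia.
  by move: wia an nwj; clear; lia.
have ri' : n %% m <= i by move: ri ir; clear; lia.
case: (Hdec wj Sj) => [S'j|[y [Sy E]]].
  have [u Hu] := apery_ex i NS' m0.
  have [v Hv] := apery_ex i.+1 NS' m0.
  have uv := HwS' i u v i1 im Hu Hv.
  have [Su Ru _] := Hu.
  have wiu := apery_le Hi (Hsub _ Su) Ru.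
  have vwj := apery_le Hv S'j Rj.
  by move: wiu uv vwj; clear; lia.
have Ry : y %% m = (i.+1 - n %% m) %% m.
  apply/eqP; rewrite -(eqn_modDl (n %% m)) subnKC //.
  by rewrite modnDml -E Rj.
case: (eqVneq i (n %% m)) => [ei|ei].
  have win : wi <= n by apply: (apery_le Hi Sn); rewrite ei modn_mod.
  have y0 : 0 < y.
    rewrite lt0n; apply/eqP => y0; move: Ry.
    by rewrite y0 mod0n ei subSn // subnn (modn_small m1).
  by rewrite E; move: win y0; clear; lia.
have rk : n %% m < i by move: ri' ei; clear; lia.
have [p Hp] := apery_ex (i - n %% m) NS m0.
have [q Hq] := apery_ex (i - n %% m).+1 NS m0.
have pq : p < q.
  apply: (IH (i - n %% m)) => //.
  - by move: r1 rk; clear; lia.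
  - by move: rk; clear; lia.
  - by move: r1 im rk; clear; lia.
have [Sp Rp _] := Hp.
have qy : q <= y by apply: (apery_le Hq Sy); rewrite Ry subSn.
have win : wi <= n + p.
  apply: (apery_le Hi (Sadd _ _ Sn Sp)).
  by rewrite -modnDm Rp modnDm -modnDml subnKC.
by rewrite E; move: win pq qy; clear; lia.
Qed.
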